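(* Let $D\geq 4$ and $n\geq 2$ be integers, and define the scalar density $$\mathcal{S}_{(n)}=\sum_{\substack{i=0\\ i\neq 1}}^{n}\frac{\alpha^{(n)}_{i,0}}{\beta_{i,0}}\mathcal{R}_{0,n-i,i}+\sum_{i=0}^{n-2}\frac{\alpha^{(n)}_{i,2}}{\beta_{i,2}}\mathcal{R}_{2,n-i-2,i},$$ with $$\alpha^{(n)}_{i,0}=-\frac{2^{2(1-n)+i}(i-1)[2-i+D(i-1)]\,n!}{i!(n-i)!(D-1)^{n-1}(D-2)},\qquad \alpha^{(n)}_{i,2}=\frac{2^{2(2-n)+i}(i+1)(i+2)\,n!}{(i+2)!(n-i-2)!(D-1)^{n-2}(D-2)}.$$ Then for every function $f(r)$, $$\mathcal{S}_{(n)}|_f=r^{2-D}\frac{\mathrm{d}}{\mathrm{d}r}\Big[r^{D-1}\Big(B+\tfrac{D-4}{4}\psi\Big)^{n-1}\Big(2(n-2)B-(D-4+2n)\psi\Big)\Big],$$ so in particular $\mathcal{S}_{(n)}$ is of the GQTG class.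
   Context: Work in $D$ spacetime dimensions. Let $\hat R_a{}^b=R_a{}^b-\frac{1}{D}\delta_a^bR$ be the traceless Ricci tensor and $W_{ab}{}^{cd}$ the Weyl tensor. Define the tensors (with the index symmetries of the Riemann tensor) $${}^{(1)}\mathcal{K}_{ab}{}^{cd}=\hat R_{[a}{}^{[c}\delta_{b]}{}^{d]},\quad {}^{(2)}\mathcal{K}_{ab}{}^{cd}=R\,\delta_{[a}{}^{[c}\delta_{b]}{}^{d]},\quad {}^{(3)}\mathcal{K}_{ab}{}^{cd}=W_{ab}{}^{cd}.$$ For $q\geq1$ let $({}^{(i)}\mathcal{K}^q)_{ab}{}^{cd}={}^{(i)}\mathcal{K}_{ab}{}^{a_1b_1}\,{}^{(i)}\mathcal{K}_{a_1b_1}{}^{a_2b_2}\cdots{}^{(i)}\mathcal{K}_{a_{q-1}b_{q-1}}{}^{cd}$ ($q$ factors), and $({}^{(i)}\mathcal{K}^0)_{ab}{}^{cd}=\delta_{[a}{}^{[c}\delta_{b]}{}^{d]}$. Set $\mathcal{R}_{q,m,p}=({}^{(1)}\mathcal{K}^q)_{ab}{}^{cd}({}^{(2)}\mathcal{K}^m)_{cd}{}^{ef}({}^{(3)}\mathcal{K}^p)_{ef}{}^{ab}$. For integers $p,q\geq0$ define $$\beta_{p,q}=\frac{(-1)^q2^p}{D^q[(D-1)(D-2)]^p}\Big[(-1)^{p+q}2^{p+q-1}(D-2)(D-3)+2^{1-q}(D-2)(D-3)^p(D-4)^q+(-1)^p(D-2)^{p+q}(D-3)^p\Big].$$ Consider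 the metric $\mathrm{d}s^2=-f(r)\mathrm{d}t^2+\mathrm{d}r^2/f(r)+r^2\mathrm{d}\Sigma^2_{k}$, where $\mathrm{d}\Sigma^2_k$ is the metric of a $(D-2)$-dimensional space of constant sectional curvature $k\in\{1,0,-1\}$; $\mathcal{L}|_f$ denotes the evaluation of a scalar invariant on it, and $A=f''/2$, $B=-f'/(2r)$, $\psi=(k-f)/r^2$. A density $\mathcal{L}$ is of the GQTG class if $r^{D-2}\mathcal{L}|_f=\frac{\mathrm{d}}{\mathrm{d}r}F_0(r,f,f')$ for some function $F_0$, for all $f$. *)

(* Defs.v *)
From HB Require Import structures.
From mathcomp Require Import all_boot all_order all_algebra.
From mathcomp Require Import all_classical all_reals all_analysis.
Set Implicit Arguments. Unset Strict Implicit. Unset Printing Implicit Defensive.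
Import Order.TTheory GRing.Theory Num.Theory.
Local Open Scope ring_scope.

Section Tensors.
Variables (R : realType) (D : nat).

(* Mixed tensors T_{ab}^{cd} with frame indices a,b,c,d in {0,..,D-1}. *)
Definition tens := 'I_D -> 'I_D -> 'I_D -> 'I_D -> R.

Definition delta (i j : 'I_D) : R := (i == j)%:R.

Definition idT : tens := fun a b c d =>
  (delta a c * delta b d - delta a d * delta b c) / 2.

Definition asym (T : tens) : tens := fun a b c d =>
  (T a b c d - T b a c d - T a b d c + T b a d c) / 4.

Definition tmul (S T : tens) : tens := fun a b c d =>
  \sum_(e < D) \sum_(f < D) S a b e f * T e f c d.

Definition tpow (T : tens) (q : nat) : tens := iter q (fun X => tmul X T) idT.

Definition ricci (Rm : tens) (a c : 'I_D) : R := \sum_(b < D) Rm a b c b.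
Definition rscal (Rm : tens) : R := \sum_(a < D) ricci Rm a a.
Definition tricci (Rm : tens) (a c : 'I_D) : R :=
  ricci Rm a c - delta a c * rscal Rm / D%:R.

Definition weyl (Rm : tens) : tens := fun a b c d =>
  Rm a b c d
  - 4 / (D%:R - 2) * asym (fun a b c d => ricci Rm a c * delta b d) a b c d
  + 2 * rscal Rm / ((D%:R - 1) * (D%:R - 2)) * idT a b c d.

Definition K1 (Rm : tens) : tens := asym (fun a b c d => tricci Rm a c * delta b d).
Definition K2 (Rm : tens) : tens := fun a b c d => rscal Rm * idT a b c d.
Definition K3 (Rm : tens) : tens := weyl Rm.

Definition Rqmp (Rm : tens) (q m p : nat) : R :=
  \sum_(a < D) \sum_(b < D) \sum_(c < D) \sum_(d < D) \sum_(e < D) \sum_(f < D)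
    tpow (K1 Rm) q a b c d * tpow (K2 Rm) m c d e f * tpow (K3 Rm) p e f a b.

End Tensors.

Definition Dr (R : realType) (D : nat) : R := D%:R.

Definition beta (R : realType) (D p q : nat) : R :=
  let d : R := D%:R in
  (-1) ^+ q * 2 ^+ p / (d ^+ q * ((d - 1) * (d - 2)) ^+ p) *
  ( (-1) ^+ (p + q) * (2 : R) ^ ((p + q)%:Z - 1) * (d - 2) * (d - 3)
  + (2 : R) ^ (1 - q%:Z) * (d - 2) * (d - 3) ^+ p * (d - 4) ^+ q
  + (-1) ^+ p * (d - 2) ^+ (p + q) * (d - 3) ^+ p ).

Definition alpha0 (R : realType) (D n i : nat) : R :=
  let d : R := D%:R in
  - ((2 : R) ^ (2 * (1 - n%:Z) + i%:Z) * (i%:R - 1) * (2 - i%:R + d * (i%:R - 1))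
      * (n`!)%:R)
  / ((i`!)%:R * ((n - i)`!)%:R * (d - 1) ^+ (n - 1) * (d - 2)).

Definition alpha2 (R : realType) (D n i : nat) : R :=
  let d : R := D%:R in
  ((2 : R) ^ (2 * (2 - n%:Z) + i%:Z) * (i%:R + 1) * (i%:R + 2) * (n`!)%:R)
  / (((i + 2)`!)%:R * ((n - i - 2)`!)%:R * (d - 1) ^+ (n - 2) * (d - 2)).

Definition S_n (R : realType) (D n : nat) (Rm : tens R D) : R :=
  \sum_(0 <= i < n.+1 | i != 1%N)
      alpha0 R D n i / beta R D i 0 * Rqmp Rm 0 (n - i) i
  + \sum_(0 <= i < n.-1)
      alpha2 R D n i / beta R D i 2 * Rqmp Rm 2 (n - i - 2) i.

(* Mixed Riemann tensor R_{ab}^{cd} of ds^2 = -f dt^2 + dr^2/f + r^2 dSigma_k^2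
   at radius r, in the orthonormal frame (index 0 = t, 1 = r, >= 2 = Sigma),
   given the values f0 = f(r), f1 = f'(r), f2 = f''(r):
   R_{ab}^{cd} = K_{ab} (delta_a^c delta_b^d - delta_a^d delta_b^c), with
   K_{tr} = -f''/2, K_{ti} = K_{ri} = -f'/(2r), K_{ij} = (k - f)/r^2. *)
Definition riem_f (R : realType) (D : nat) (k r f0 f1 f2 : R) : tens R D :=
  fun a b c d =>
    let sec : R :=
      if ((a < 2)%N && (b < 2)%N) then - f2 / 2
      else if ((a < 2)%N || (b < 2)%N) then - f1 / (2 * r)
      else (k - f0) / r ^+ 2 in
    sec * (@delta R D a c * @delta R D b d - @delta R D a d * @delta R D b c).

Definition eval_f (R : realType) (D : nat) (L : tens R D -> R) (k : R)
  (f : R -> R) (r : R) : R :=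
  L (@riem_f R D k r (f r) (derive1 f r) (derive1 (derive1 f) r)).

Definition twice_diff (R : realType) (f : R -> R) : Prop :=
  (forall x, derivable f x 1) /\ (forall x, derivable (derive1 f) x 1).

Definition is_GQTG (R : realType) (D : nat) (L : tens R D -> R) (k : R) : Prop :=
  exists F0 : R -> R -> R -> R,
    forall f : R -> R, twice_diff f -> forall r : R, 0 < r ->
      r ^+ (D - 2) * eval_f L k f r
      = derive1 (fun s => F0 s (f s) (derive1 f s)) r.

(* Main.v *)
Require Import Defs.
From HB Require Import structures.
From mathcomp Require Import all_boot all_order all_algebra.
From mathcomp Require Import all_classical all_reals all_analysis.
From mathcomp Require Import ring lra zify.
Import Order.TTheory GRing.Theory Num.Theory.
Set Implicit Arguments. Unset Strict Implicit. Unset Printing Implicit Defensive.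
Local Open Scope ring_scope.

Ltac nz := rewrite ?eqb_id; first [done | (repeat (apply/andP; split);
  repeat (first [apply: mulf_neq0 | apply: expf_neq0 | apply: invr_neq0]);
  apply/eqP => ?; lra)].


Section T.
Variables (R : realType) (D : nat).

Definition diagT (l : 'I_D -> 'I_D -> R) : tens R D :=
  fun a b c d => l a b * idT R a b c d.

Lemma deltaxx (a : 'I_D) : delta R a a = 1.
Proof. by rewrite /delta eqxx. Qed.

Lemma sum_delta (a : 'I_D) (F : 'I_D -> R) :
  \sum_(e < D) delta R a e * F e = F a.
Proof.
rewrite (bigD1 a) //= deltaxx mul1r big1 ?addr0 // => e.
by rewrite eq_sym /delta => /negbTE ->; rewrite mul0r.
Qed.

Lemma sum_idT (a b : 'I_D) (G : 'I_D -> 'I_D -> R) :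
  \sum_(e < D) \sum_(f < D) idT R a b e f * G e f = (G a b - G b a) / 2.
Proof.
transitivity (\sum_(e < D) (delta R a e * G e b - delta R b e * G e a) / 2).
  apply: eq_bigr => e _.
  transitivity (\sum_(f < D) ((delta R a e / 2) * (delta R b f * G e f)
     - (delta R b e / 2) * (delta R a f * G e f))).
    by apply: eq_bigr => f _; rewrite /idT; ring.
  by rewrite sumrB -!mulr_sumr !sum_delta; ring.
by rewrite -mulr_suml sumrB !sum_delta.
Qed.

Lemma idT_swap (a b c d : 'I_D) : idT R b a c d = - idT R a b c d.
Proof. rewrite /idT; ring. Qed.

Lemma tmul_diag (l m : 'I_D -> 'I_D -> R) : (forall a b, m a b = m b a) ->
  tmul (diagT l) (diagT m) = diagT (fun a b => l a b * m a b).
Proof.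
move=> ms; apply: funext => a; apply: funext => b; apply: funext => c;
  apply: funext => d.
rewrite /tmul /diagT.
transitivity (l a b * \sum_(e < D) \sum_(f < D)
   idT R a b e f * (m e f * idT R e f c d)).
  rewrite mulr_sumr; apply: eq_bigr => e _; rewrite mulr_sumr.
  by apply: eq_bigr => f _; ring.
by rewrite sum_idT (idT_swap a b) (ms b a); field.
Qed.

Lemma idT_diag : @idT R D = diagT (fun _ _ => 1).
Proof.
apply: funext => a; apply: funext => b; apply: funext => c; apply: funext => d.
by rewrite /diagT mul1r.
Qed.

Lemma tpow_diag (l : 'I_D -> 'I_D -> R) q : (forall a b, l a b = l b a) ->
  tpow (diagT l) q = diagT (fun a b => l a b ^+ q).
Proof.
move=> ls; elim: q => [|q IH].
  rewrite /tpow /= idT_diag; congr diagT.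
change (tmul (tpow (diagT l) q) (diagT l) = diagT (fun a b => l a b ^+ q.+1)).
rewrite IH tmul_diag //; congr diagT.
by apply: funext => a; apply: funext => b; rewrite exprSr.
Qed.

Lemma Rqmp_diag (Rm : tens R D) (l1 l2 l3 : 'I_D -> 'I_D -> R) q m p :
  (forall a b, l1 a b = l1 b a) ->
  (forall a b, l2 a b = l2 b a) ->
  (forall a b, l3 a b = l3 b a) ->
  K1 Rm = diagT l1 -> K2 Rm = diagT l2 -> K3 Rm = diagT l3 ->
  Rqmp Rm q m p = \sum_(a < D) \sum_(b < D)
     l1 a b ^+ q * l2 a b ^+ m * l3 a b ^+ p * idT R a b a b.
Proof.
move=> s1 s2 s3 e1 e2 e3; rewrite /Rqmp e1 e2 e3 !tpow_diag //.
apply: eq_bigr => a _; apply: eq_bigr => b _.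
transitivity (\sum_(c < D) \sum_(d < D)
   diagT (fun a b => l1 a b ^+ q) a b c d *
   tmul (diagT (fun a b => l2 a b ^+ m)) (diagT (fun a b => l3 a b ^+ p)) c d a b).
  apply: eq_bigr => c _; apply: eq_bigr => d _.
  rewrite /tmul mulr_sumr; apply: eq_bigr => e _; rewrite mulr_sumr.
  by apply: eq_bigr => f _; rewrite mulrA.
have E1 := @tmul_diag (fun a b => l2 a b ^+ m) (fun a b => l3 a b ^+ p)
  (fun x y => congr1 (fun t => t ^+ p) (s3 x y)).
have E2 := @tmul_diag (fun a b => l1 a b ^+ q) (fun a b => l2 a b ^+ m * l3 a b ^+ p)
  (fun x y => congr2 (fun t u => t ^+ m * u ^+ p) (s2 x y) (s3 x y)).
rewrite E1.
change (tmul (diagT (fun a b => l1 a b ^+ q))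
   (diagT (fun a b => l2 a b ^+ m * l3 a b ^+ p)) a b a b = l1 a b ^+ q * l2 a b ^+ m * l3 a b ^+ p * idT R a b a b).
by rewrite E2 /diagT /=; ring.
Qed.

End T.



Section Riem.
Variables (R : realType) (D : nat) (k r f0 f1 f2 : R).
Local Notation d := (D%:R : R).

Definition s1 : R := - f2 / 2.
Definition s2 : R := - f1 / (2 * r).
Definition s3 : R := (k - f0) / r ^+ 2.
Definition secb (x y : bool) : R := if x && y then s1 else if x || y then s2 else s3.
Definition ricv (x : bool) : R :=
  if x then s1 + (d - 2) * s2 else 2 * s2 + (d - 3) * s3.
Definition Rs : R := 2 * ricv true + (d - 2) * ricv false.
Definition rho (x : bool) : R := ricv x - Rs / d.
Definition L1 (x y : bool) : R := (rho x + rho y) / 2.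
Definition L3 (x y : bool) : R :=
  2 * secb x y - 4 / (d - 2) * ((ricv x + ricv y) / 2) + 2 * Rs / ((d - 1) * (d - 2)).

Lemma natr_neq0 (n : nat) : (0 < n)%N -> n%:R != 0 :> R.
Proof. by move=> h; rewrite pnatr_eq0 -lt0n. Qed.

Lemma dge4 : (4 <= D)%N -> 4 <= d.
Proof. by move=> h; have := h; rewrite -(ler_nat R). Qed.

Lemma riem_diag : @riem_f R D k r f0 f1 f2 =
  diagT (fun a b : 'I_D => 2 * secb (a < 2)%N (b < 2)%N).
Proof.
apply: funext => a; apply: funext => b; apply: funext => c; apply: funext => e.
rewrite /riem_f /diagT /idT /secb /s1 /s2 /s3 /=.
set S := (if _ then _ else _). by field.
Qed.

Lemma sum_cls (F : bool -> R) : (2 <= D)%N ->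
  \sum_(b < D) F (b < 2)%N = 2 * F true + (d - 2) * F false.
Proof.
move=> HD.
rewrite -(big_mkord xpredT (fun b => F (b < 2)%N)).
rewrite (big_cat_nat (leq0n 2) HD) /=.
rewrite (@big_ltn _ _ _ 0 2) // (@big_ltn _ _ _ 1 2) // (@big_geq _ _ _ 2 2) //.
rewrite (@eq_big_nat _ _ _ 2 D _ (fun=> F false)); last first.
  by move=> i /andP [Hi _]; rewrite ltnNge Hi.
rewrite sumr_const_nat -[F false *+ _]mulr_natr natrB //=; ring.
Qed.

Lemma ricci_diag (l : 'I_D -> 'I_D -> R) (a c : 'I_D) :
  ricci (diagT l) a c = delta R a c * (\sum_(b < D) l a b - l a a) / 2.
Proof.
rewrite /ricci.
transitivity (\sum_(b < D) (delta R a c / 2 * l a b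
    - delta R a b * (delta R b c * l a b / 2))).
  by apply: eq_bigr => b _; rewrite /diagT /idT deltaxx; ring.
rewrite sumrB -mulr_sumr sum_delta; ring.
Qed.

Lemma ricci_riem (a c : 'I_D) : (2 <= D)%N ->
  ricci (@riem_f R D k r f0 f1 f2) a c = delta R a c * ricv (a < 2)%N.
Proof.
move=> HD; rewrite riem_diag ricci_diag.
rewrite (sum_cls (fun y => 2 * secb (a < 2)%N y)) //.
by rewrite /secb /ricv; case: (a < 2)%N => /=; field.
Qed.

Lemma rscal_riem : (2 <= D)%N -> rscal (@riem_f R D k r f0 f1 f2) = Rs.
Proof.
move=> HD; rewrite /rscal.
transitivity (\sum_(a < D) ricv (a < 2)%N).
  by apply: eq_bigr => a _; rewrite ricci_riem // deltaxx mul1r.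
by rewrite (sum_cls ricv).
Qed.

Lemma K1_riem : (2 <= D)%N -> K1 (@riem_f R D k r f0 f1 f2) =
  diagT (fun a b : 'I_D => L1 (a < 2)%N (b < 2)%N).
Proof.
move=> HD.
apply: funext => a; apply: funext => b; apply: funext => c; apply: funext => e.
rewrite /K1 /asym /diagT /idT /L1 /rho /tricci /= !ricci_riem // rscal_riem //.
field; apply: natr_neq0; lia.
Qed.

Lemma K2_riem : (2 <= D)%N -> K2 (@riem_f R D k r f0 f1 f2) =
  diagT (fun a b : 'I_D => Rs).
Proof.
move=> HD.
apply: funext => a; apply: funext => b; apply: funext => c; apply: funext => e.
by rewrite /K2 /diagT rscal_riem.
Qed.

Lemma K3_riem : (4 <= D)%N -> K3 (@riem_f R D k r f0 f1 f2) =
  diagT (fun a b : 'I_D => L3 (a < 2)%N (b < 2)%N).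
Proof.
move=> H4; have HD : (2 <= D)%N by lia. have h4 := dge4 H4.
apply: funext => a; apply: funext => b; apply: funext => c; apply: funext => e.
rewrite /K3 /weyl /asym /= !ricci_riem // rscal_riem // riem_diag.
rewrite /diagT /idT /L3; field; nz.
Qed.

Lemma pair_sum (H : bool -> bool -> R) : (2 <= D)%N ->
  \sum_(a < D) \sum_(b < D) H (a < 2)%N (b < 2)%N * idT R a b a b =
  (2 * (2 * H true true + (d - 2) * H true false - H true true)
   + (d - 2) * (2 * H false true + (d - 2) * H false false - H false false)) / 2.
Proof.
move=> HD.
transitivity (\sum_(a < D) (2 * H (a < 2)%N true + (d - 2) * H (a < 2)%N false
   - H (a < 2)%N (a < 2)%N) / 2).
  apply: eq_bigr => a _.
  transitivity (\sum_(b < D) (H (a < 2)%N (b < 2)%N / 2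
     - delta R a b * (delta R b a * H (a < 2)%N (b < 2)%N / 2))).
    by apply: eq_bigr => b _; rewrite /idT !deltaxx; ring.
  rewrite sumrB -mulr_suml sum_delta deltaxx.
  rewrite (sum_cls (fun y => H (a < 2)%N y)) //; ring.
rewrite (sum_cls (fun x => (2 * H x true + (d - 2) * H x false - H x x) / 2)) //.
ring.
Qed.

Lemma sym_cls (H : bool -> bool -> R) : (forall x y, H x y = H y x) ->
  forall a b : 'I_D, H (a < 2)%N (b < 2)%N = H (b < 2)%N (a < 2)%N.
Proof. by move=> Hs a b; rewrite Hs. Qed.

Lemma Rqmp_riem q m p : (4 <= D)%N ->
  Rqmp (@riem_f R D k r f0 f1 f2) q m p =
  let H := fun x y => L1 x y ^+ q * Rs ^+ m * L3 x y ^+ p in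
  (2 * (2 * H true true + (d - 2) * H true false - H true true)
   + (d - 2) * (2 * H false true + (d - 2) * H false false - H false false)) / 2.
Proof.
move=> H4; have HD : (2 <= D)%N by lia.
rewrite (Rqmp_diag q m p _ _ _ (K1_riem HD) (K2_riem HD) (K3_riem H4)).
- exact: (pair_sum (fun x y => L1 x y ^+ q * Rs ^+ m * L3 x y ^+ p) HD).
- by apply: sym_cls => x y; rewrite /L1 addrC.
- by [].
- by apply: sym_cls => x y; rewrite /L3 /secb andbC orbC [ricv y + _]addrC.
Qed.

End Riem.



Lemma powzm1 (R : realType) (x : R) (p : nat) : x != 0 -> x ^ (p%:Z - 1) = x ^+ p / x.
Proof. by move=> hx; rewrite expfzDr // exprN1 -exprnP. Qed.

Section Vals.
Variables (R : realType) (D : nat) (k r f0 f1 f2 : R).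
Local Notation d := (D%:R : R).
Local Notation s1 := (s1 f2).
Local Notation s2 := (s2 r f1).
Local Notation s3 := (s3 k r f0).
Definition ww : R := - s1 + 2 * s2 - s3.
Definition tau : R := s1 + (d - 4) * s2 - (d - 3) * s3.
Definition KK : R := 2 * ww / ((d - 1) * (d - 2)).

Lemma L3_vals : (4 <= D)%N ->
  [/\ L3 D k r f0 f1 f2 true true = KK * (-1 * ((d - 2) * (d - 3))),
      L3 D k r f0 f1 f2 true false = KK * (d - 3),
      L3 D k r f0 f1 f2 false true = KK * (d - 3) &
      L3 D k r f0 f1 f2 false false = KK * (-1 * 2)].
Proof.
move=> H4; have h4 := dge4 R H4.
by split; rewrite /L3 /secb /ricv /Rs /KK /ww /=; field; nz.
Qed.

Lemma L1_vals : (4 <= D)%N ->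
  [/\ L1 D k r f0 f1 f2 true true = (d - 2) / d * tau,
      L1 D k r f0 f1 f2 true false = (d - 4) / (2 * d) * tau,
      L1 D k r f0 f1 f2 false true = (d - 4) / (2 * d) * tau &
      L1 D k r f0 f1 f2 false false = -2 / d * tau].
Proof.
move=> H4; have h4 := dge4 R H4.
by split; rewrite /L1 /rho /ricv /Rs /tau /=; field; nz.
Qed.

Lemma Rqmp0 m p : (4 <= D)%N ->
  Rqmp (@riem_f R D k r f0 f1 f2) 0 m p = Rs D k r f0 f1 f2 ^+ m * ww ^+ p * beta R D p 0.
Proof.
move=> H4; have h4 := dge4 R H4.
rewrite Rqmp_riem //=.
have [-> -> -> ->] := L3_vals H4.
rewrite /beta /= !addn0 !expr0 powzm1; last by nz.
rewrite subr0 expr1z /KK.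
rewrite !exprMn !exprVn !exprMn.
field; nz.
Qed.

Lemma Rqmp2 m p : (4 <= D)%N ->
  Rqmp (@riem_f R D k r f0 f1 f2) 2 m p =
  tau ^+ 2 * Rs D k r f0 f1 f2 ^+ m * ww ^+ p * beta R D p 2.
Proof.
move=> H4; have h4 := dge4 R H4.
rewrite Rqmp_riem //=.
have [-> -> -> ->] := L3_vals H4.
have [-> -> -> ->] := L1_vals H4.
rewrite /beta /= powzm1; last by nz.
have -> : (1 - 2%:Z) = -1 by [].
rewrite exprN1 /KK !exprD.
rewrite !exprMn !exprVn !exprMn.
field; nz.
Qed.

End Vals.



Section BetaNZ.
Variables (R : realType) (D : nat).
Local Notation d := (D%:R : R).

Lemma beta0_neq0 p : (4 <= D)%N -> p != 1%N -> beta R D p 0 != 0.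
Proof.
move=> H4 hp; have h4 := dge4 R H4.
rewrite /beta /= !addn0 !expr0 powzm1; last by nz.
rewrite subr0 expr1z.
apply: mulf_neq0.
  apply: mulf_neq0; first by rewrite mul1r; nz.
  rewrite invr_neq0 // mul1r; apply: expf_neq0; apply: mulf_neq0; nz.
have u0 : 0 < (d - 2) ^+ p by apply: exprn_gt0; lra.
have v0 : 0 < (d - 3) ^+ p by apply: exprn_gt0; lra.
have e0 : 0 < (2 : R) ^+ p by apply: exprn_gt0; lra.
have t1 : 0 < 2 ^+ p / 2 * (d - 2) * (d - 3).
  apply: mulr_gt0; last lra. apply: mulr_gt0; last lra.
  apply: mulr_gt0 => //; lra.
rewrite -signr_odd; case Ho: (odd p) => /=.
- have p3 : (3 <= p)%N.
    by move: hp Ho; clear; case: p => [|[|[|p]]].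
  have u3 : (d - 2) ^+ 3 <= (d - 2) ^+ p by apply: ler_weXn2l => //; lra.
  have key : 0 < ((d - 2) ^+ p - 2 * (d - 2)) * (d - 3) ^+ p.
    apply: mulr_gt0 => //.
    have h : 0 <= (d - 2) * ((d - 4) * d).
      by apply: mulr_ge0; [lra | apply: mulr_ge0; lra].
    have : 4 * (d - 2) <= (d - 2) ^+ 3.
      have -> : (d - 2) ^+ 3 = 4 * (d - 2) + (d - 2) * ((d - 4) * d) by ring.
      lra.
    lra.
  apply: ltr0_neq0.
  rewrite expr1.
  have -> : (-1 * (2 ^+ p / 2) * (d - 2) * (d - 3) + 2 * (d - 2) * (d - 3) ^+ p * 1
     + -1 * (d - 2) ^+ p * (d - 3) ^+ p) =
     - (2 ^+ p / 2 * (d - 2) * (d - 3)) - ((d - 2) ^+ p - 2 * (d - 2)) * (d - 3) ^+ p.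
    ring.
  lra.
- apply: lt0r_neq0; rewrite expr0.
  have t2 : 0 < (d - 2) * (d - 3) ^+ p by apply: mulr_gt0 => //; lra.
  have t3 : 0 < (d - 2) ^+ p * (d - 3) ^+ p by apply: mulr_gt0.
  have -> : (1 * (2 ^+ p / 2) * (d - 2) * (d - 3) + 2 * (d - 2) * (d - 3) ^+ p * 1
     + 1 * (d - 2) ^+ p * (d - 3) ^+ p) =
     (2 ^+ p / 2 * (d - 2) * (d - 3)) + 2 * ((d - 2) * (d - 3) ^+ p)
     + (d - 2) ^+ p * (d - 3) ^+ p.
    ring.
  lra.
Qed.

Lemma beta2_neq0 p : (4 <= D)%N -> beta R D p 2 != 0.
Proof.
move=> H4; have h4 := dge4 R H4.
rewrite /beta /= powzm1; last by nz.
have -> : (1 - 2%:Z) = -1 by [].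
rewrite exprN1 !exprD.
apply: mulf_neq0; first by nz.
have u1 : 1 <= (d - 2) ^+ p by apply: exprn_ege1; lra.
have v0 : 0 < (d - 3) ^+ p by apply: exprn_gt0; lra.
have e0 : 0 < (2 : R) ^+ p by apply: exprn_gt0; lra.
have t1 : 0 < 2 ^+ p * (d - 2) * (d - 3).
  apply: mulr_gt0; last lra. apply: mulr_gt0 => //; lra.
have t2 : 0 <= (d - 2) * (d - 3) ^+ p * (d - 4) ^+ 2.
  apply: mulr_ge0; last by rewrite expr2; nra.
  apply: mulr_ge0 => //; lra.
rewrite -signr_odd; case Ho: (odd p) => /=.
- have p1 : (1 <= p)%N by move: Ho; clear; case: p.
  have up : (d - 2) ^+ 1 <= (d - 2) ^+ p by apply: ler_weXn2l => //; lra.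
  have key : 0 < ((d - 2) ^+ p * (d - 2) - (d - 4) ^+ 2 / 2) * ((d - 2) * (d - 3) ^+ p).
    apply: mulr_gt0; last by apply: mulr_gt0 => //; lra.
    rewrite expr1 in up; rewrite expr2; nra.
  apply: ltr0_neq0; rewrite expr1.
  have -> : (-1 * (-1) ^+ 2 * (2 ^+ p * 2 ^+ 2 / 2) * (d - 2) * (d - 3) +
     2^-1 * (d - 2) * (d - 3) ^+ p * (d - 4) ^+ 2 +
     -1 * ((d - 2) ^+ p * (d - 2) ^+ 2) * (d - 3) ^+ p) =
     - (2 * (2 ^+ p * (d - 2) * (d - 3)))
     - ((d - 2) ^+ p * (d - 2) - (d - 4) ^+ 2 / 2) * ((d - 2) * (d - 3) ^+ p).
    by field; nz.
  lra.
- apply: lt0r_neq0; rewrite expr0.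
  have t3 : 0 < (d - 2) ^+ p * (d - 2) ^+ 2 * (d - 3) ^+ p.
    apply: mulr_gt0 => //; apply: mulr_gt0; [lra| rewrite expr2; nra].
  have -> : (1 * (-1) ^+ 2 * (2 ^+ p * 2 ^+ 2 / 2) * (d - 2) * (d - 3) +
     2^-1 * (d - 2) * (d - 3) ^+ p * (d - 4) ^+ 2 +
     1 * ((d - 2) ^+ p * (d - 2) ^+ 2) * (d - 3) ^+ p) =
     2 * (2 ^+ p * (d - 2) * (d - 3)) + ((d - 2) * (d - 3) ^+ p * (d - 4) ^+ 2) / 2
     + (d - 2) ^+ p * (d - 2) ^+ 2 * (d - 3) ^+ p.
    by field; nz.
  lra.
Qed.

End BetaNZ.


Section Binom.
Variable R : realType.

Lemma B0 (x y : R) n :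
  \sum_(0 <= i < n.+1) 'C(n, i)%:R * (x ^+ (n - i) * y ^+ i) = (x + y) ^+ n.
Proof. by rewrite exprDn big_mkord; apply: eq_bigr => i _; rewrite mulr_natl. Qed.

Lemma B1 (x y : R) n :
  \sum_(0 <= i < n.+2) i%:R * ('C(n.+1, i)%:R * (x ^+ (n.+1 - i) * y ^+ i))
  = n.+1%:R * y * (x + y) ^+ n.
Proof.
rewrite big_nat_recl //= mul0r add0r.
transitivity (\sum_(0 <= i < n.+1) n.+1%:R * y * ('C(n, i)%:R * (x ^+ (n - i) * y ^+ i))).
  apply: eq_bigr => i _; rewrite subSS.
  have E : (i.+1 * 'C(n.+1, i.+1) = n.+1 * 'C(n, i))%N by rewrite mul_bin_diag.
  rewrite mulrA -natrM E natrM exprS; ring.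
by rewrite -mulr_sumr B0.
Qed.

Lemma B2 (x y : R) n :
  \sum_(0 <= i < n.+3) i%:R * (i%:R - 1) * ('C(n.+2, i)%:R * (x ^+ (n.+2 - i) * y ^+ i))
  = n.+2%:R * n.+1%:R * y ^+ 2 * (x + y) ^+ n.
Proof.
rewrite big_nat_recl //= mul0r mul0r add0r.
rewrite big_nat_recl //= subrr mulr0 mul0r add0r.
transitivity (\sum_(0 <= i < n.+1) n.+2%:R * n.+1%:R * y ^+ 2 *
   ('C(n, i)%:R * (x ^+ (n - i) * y ^+ i))).
  apply: eq_bigr => i _; rewrite !subSS.
  have E : (i.+2 * i.+1 * 'C(n.+2, i.+2) = n.+2 * n.+1 * 'C(n, i))%N.
    have E1 : (n.+2 * 'C(n.+1, i.+1) = i.+2 * 'C(n.+2, i.+2))%N by rewrite mul_bin_diag.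
    have E2 : (n.+1 * 'C(n, i) = i.+1 * 'C(n.+1, i.+1))%N by rewrite mul_bin_diag.
    by rewrite [(i.+2 * _)%N]mulnC -mulnA -E1 mulnCA -E2 mulnA.
  have -> : (i.+2)%:R - 1 = (i.+1)%:R :> R by rewrite -natr1 addrK.
  rewrite (_ : (i.+2)%:R * (i.+1)%:R * ('C(n.+2, i.+2)%:R * (x ^+ (n - i) * y ^+ i.+2))
     = (i.+2 * i.+1 * 'C(n.+2, i.+2))%N%:R * (x ^+ (n - i) * y ^+ (i + 2)));
    last by rewrite !natrM addn2; ring.
  by rewrite E !natrM exprD; ring.
by rewrite -mulr_sumr B0.
Qed.

Lemma natS1 i : (i.+1)%:R = i%:R + 1 :> R.
Proof. by rewrite -addn1 natrD. Qed.
Lemma natS2 i : (i.+2)%:R = i%:R + 2 :> R.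
Proof. by rewrite -addn2 natrD. Qed.

End Binom.



Section SnVal.
Variables (R : realType) (D : nat) (k r f0 f1 f2 : R).
Local Notation d := (D%:R : R).

Lemma c0E m : (2:R) ^ (2 * (1 - (m.+2)%:Z)) = ((2:R) ^+ 2 ^+ m.+1)^-1.
Proof.
have -> : (2 * (1 - (m.+2)%:Z) = - ((2 * m.+1)%N)%:Z)%R by lia.
by rewrite -exprnN exprM.
Qed.

Lemma c2E m : (2:R) ^ (2 * (2 - (m.+2)%:Z)) = ((2:R) ^+ 2 ^+ m)^-1.
Proof.
have -> : (2 * (2 - (m.+2)%:Z) = - ((2 * m)%N)%:Z)%R by lia.
by rewrite -exprnN exprM.
Qed.

Lemma alpha0E m i : (4 <= D)%N -> (i <= m.+2)%N ->
  alpha0 R D m.+2 i = - ((2:R) ^ (2 * (1 - (m.+2)%:Z)) * 2 ^+ i *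
     ((i%:R - 1) * (2 - i%:R + d * (i%:R - 1))) * 'C(m.+2, i)%:R)
     / ((d - 1) ^+ m.+1 * (d - 2)).
Proof.
move=> H4 Hi; have h4 := dge4 R H4.
have f1p : 0 < (i`!)%:R :> R by rewrite ltr0n fact_gt0.
have f2p : 0 < ((m.+2 - i)`!)%:R :> R by rewrite ltr0n fact_gt0.
rewrite /alpha0 /= expfzDr // -exprnP.
have -> : (m.+2 - 1 = m.+1)%N by lia.
rewrite -(bin_fact Hi) !natrM.
field; nz.
Qed.

Lemma alpha2E m i : (4 <= D)%N -> (i <= m)%N ->
  alpha2 R D m.+2 i = (2:R) ^ (2 * (2 - (m.+2)%:Z)) * 2 ^+ i *
     ((m.+2)%:R * (m.+1)%:R) * 'C(m, i)%:R / ((d - 1) ^+ m * (d - 2)).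
Proof.
move=> H4 Hi; have h4 := dge4 R H4.
have f1p : 0 < (i`!)%:R :> R by rewrite ltr0n fact_gt0.
have f2p : 0 < ((m - i)`!)%:R :> R by rewrite ltr0n fact_gt0.
have ip : 0 <= i%:R :> R by apply: ler0n.
rewrite /alpha2 /= expfzDr // -exprnP.
have -> : (m.+2 - i - 2 = m - i)%N by lia.
have -> : (m.+2 - 2 = m)%N by lia.
rewrite addn2 !factS -(bin_fact Hi) !natrM (natS2 R i) (natS1 R i).
field; nz.
Qed.

End SnVal.



Section SnVal2.
Variables (R : realType) (D : nat) (k r f0 f1 f2 : R).
Local Notation d := (D%:R : R).
Local Notation s2 := (s2 r f1).
Local Notation s3 := (s3 k r f0).
Local Notation ww := (ww k r f0 f1 f2).
Local Notation tau := (tau D k r f0 f1 f2).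
Local Notation Rs := (Rs D k r f0 f1 f2).
Local Notation RM := (@riem_f R D k r f0 f1 f2).

Definition Xv : R := s2 + (d - 4) / 4 * s3.

Lemma canc (a b c : R) : b != 0 -> a / b * (c * b) = a * c.
Proof. by move=> hb; field. Qed.

Lemma Sn_val m : (4 <= D)%N ->
  @S_n R D m.+2 RM = Xv ^+ m * (- (m.+2)%:R * ((m.+2)%:R - 1) * (s2 - s3) * (ww - tau)
     + 2 * (m.+2)%:R * ww * Xv - 4 * (d - 1) * Xv ^+ 2).
Proof.
move=> H4; have h4 := dge4 R H4.
set c0 := (2:R) ^ (2 * (1 - (m.+2)%:Z)).
set c2 := (2:R) ^ (2 * (2 - (m.+2)%:Z)).
set Q0 := (d - 1) ^+ m.+1 * (d - 2).
set Q2 := (d - 1) ^+ m * (d - 2).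
set x := Rs. set y := 2 * ww.
rewrite /S_n /=.
have SA : \sum_(0 <= i < m.+3 | i != 1%N)
    alpha0 R D m.+2 i / beta R D i 0 * Rqmp RM 0 (m.+2 - i) i =
  - (c0 / Q0) * ((d - 1) * \sum_(0 <= i < m.+3)
        i%:R * (i%:R - 1) * ('C(m.+2, i)%:R * (x ^+ (m.+2 - i) * y ^+ i))
     + (2 - d) * \sum_(0 <= i < m.+3)
        i%:R * ('C(m.+2, i)%:R * (x ^+ (m.+2 - i) * y ^+ i))
     + (d - 2) * \sum_(0 <= i < m.+3)
        'C(m.+2, i)%:R * (x ^+ (m.+2 - i) * y ^+ i)).
  rewrite big_mkcond /= !mulr_sumr -!big_split /= mulr_sumr.
  apply: eq_big_nat => i /andP [_ Hi].
  have Hi' : (i <= m.+2)%N by lia.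
  have [->|hi] := eqVneq i 1%N.
    rewrite /=. rewrite /alpha0; ring.
  rewrite /= Rqmp0 // canc; last exact: beta0_neq0.
  rewrite alpha0E // /y exprMn -/c0 -/Q0.
  field; nz.
have SB : \sum_(0 <= i < m.+1)
    alpha2 R D m.+2 i / beta R D i 2 * Rqmp RM 2 (m.+2 - i - 2) i =
  c2 * ((m.+2)%:R * (m.+1)%:R) * tau ^+ 2 / Q2 *
    \sum_(0 <= i < m.+1) 'C(m, i)%:R * (x ^+ (m - i) * y ^+ i).
  rewrite mulr_sumr; apply: eq_big_nat => i /andP [_ Hi].
  have Hi' : (i <= m)%N by lia.
  rewrite Rqmp2 // canc; last exact: beta2_neq0.
  have -> : (m.+2 - i - 2 = m - i)%N by lia.
  rewrite alpha2E // /y exprMn -/c2 -/Q2.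
  field; nz.
rewrite SA SB (B2 x y m) (B1 x y m.+1) (B0 x y m.+2) (B0 x y m).
have HS : x + y = 2 ^+ 2 * (d - 1) * Xv.
  by rewrite /x /y /Rs /ricv /ww /Xv; field; nz.
rewrite HS /c0 /c2 c0E c2E /Q0 /Q2 !exprS !exprMn.
set XM := Xv ^+ m. set FM := (2:R) ^+ 2 ^+ m. set DM := (d - 1) ^+ m.
rewrite /y /tau /ww /Xv.
field; nz.
Qed.

End SnVal2.


Section Der.
Variable R : realType.
Implicit Types (f g : R -> R) (x df dg c : R).

Lemma zdmul f g x df dg : is_derive x (1:R) f df -> is_derive x (1:R) g dg ->
  is_derive x (1:R) (fun s => f s * g s) (f x * dg + g x * df).
Proof. by move=> H1 H2; exact: (is_deriveM H1 H2). Qed.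

Lemma zdadd f g x df dg : is_derive x (1:R) f df -> is_derive x (1:R) g dg ->
  is_derive x (1:R) (fun s => f s + g s) (df + dg).
Proof. by move=> H1 H2; exact: (is_deriveD H1 H2). Qed.

Lemma zdsub f g x df dg : is_derive x (1:R) f df -> is_derive x (1:R) g dg ->
  is_derive x (1:R) (fun s => f s - g s) (df - dg).
Proof. by move=> H1 H2; exact: (is_deriveB H1 H2). Qed.

Lemma zdneg f x df : is_derive x (1:R) f df ->
  is_derive x (1:R) (fun s => - f s) (- df).
Proof. by move=> H1; exact: (is_deriveN H1). Qed.

Lemma zdcst x c : is_derive x (1:R) (fun _ => c) 0.
Proof. exact: is_derive_cst. Qed.

Lemma zdid x : is_derive x (1:R) (fun s => s) 1.
Proof. exact: is_derive_id. Qed.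

Lemma zdexp f x df (n : nat) : is_derive x (1:R) f df ->
  is_derive x (1:R) (fun s => f s ^+ n) (n%:R * f x ^+ n.-1 * df).
Proof.
move=> H1; have -> : (fun s => f s ^+ n) = f ^+ n.
  by apply: funext => s; rewrite exprfctE.
exact: (is_deriveX n H1).
Qed.

Lemma zdinv f x df : f x != 0 -> is_derive x (1:R) f df ->
  is_derive x (1:R) (fun s => (f s)^-1) (- (f x) ^- 2 * df).
Proof. by move=> h H1; exact: (is_deriveV h H1). Qed.

End Der.



Lemma derive1_val (R : realType) (f : R -> R) x df :
  is_derive x (1:R) f df -> derive1 f x = df.
Proof. by move=> h; rewrite derive1E derive_val. Qed.

Lemma main_eq (R : realType) (D n : nat) (k : R) : (4 <= D)%N -> (2 <= n)%N ->
  forall f : R -> R, twice_diff f -> forall r : R, 0 < r ->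
     let d : R := D%:R in
     let B := fun s : R => - derive1 f s / (2 * s) in
     let psi := fun s : R => (k - f s) / s ^+ 2 in
     eval_f (@S_n R D n) k f r
     = r ^- (D - 2) *
       derive1 (fun s => s ^+ (D - 1) * (B s + (d - 4) / 4 * psi s) ^+ (n - 1)
                          * (2 * (n%:R - 2) * B s - (d - 4 + 2 * n%:R) * psi s)) r.
Proof.
move=> H4 H2 f [fd1 fd2] r r0 d B psi.
have [m Hm] : exists m, n = m.+2 by exists n.-2; lia.
subst n.
have h4 := dge4 R H4.
rewrite /eval_f Sn_val //.
have hf : is_derive r (1:R) f (derive1 f r).
  by rewrite derive1E; apply: derivableP; exact: fd1.
have hf' : is_derive r (1:R) (derive1 f) (derive1 (derive1 f) r).
  by rewrite derive1E; apply: derivableP; exact: fd2.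
have rn0 : r != 0 by apply: lt0r_neq0.
have h2r : 2 * r != 0.
  by rewrite /= mulf_neq0 //; apply/eqP => ?; lra.
have hr2 : r ^+ 2 != 0 by rewrite expf_neq0.
have hB : is_derive r (1:R) B _ :=
  zdmul (zdneg hf') (zdinv (f := fun s => 2 * s) h2r (zdmul (zdcst r 2) (zdid r))).
have hpsi : is_derive r (1:R) psi _ :=
  zdmul (zdsub (zdcst r k) hf) (zdinv (f := fun s => s ^+ 2) hr2 (zdexp 2 (zdid r))).
have hX : is_derive r (1:R) (fun s => B s + (d - 4) / 4 * psi s) _ :=
  zdadd hB (zdmul (zdcst r ((d - 4) / 4)) hpsi).
have hY : is_derive r (1:R)
   (fun s => 2 * ((m.+2)%:R - 2) * B s - (d - 4 + 2 * (m.+2)%:R) * psi s) _ :=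
  zdsub (zdmul (zdcst r _) hB) (zdmul (zdcst r _) hpsi).
have hG : is_derive r (1:R) (fun s => s ^+ (D - 1) * (B s + (d - 4) / 4 * psi s) ^+ (m.+2 - 1)
   * (2 * ((m.+2)%:R - 2) * B s - (d - 4 + 2 * (m.+2)%:R) * psi s)) _ :=
  zdmul (zdmul (zdexp (D - 1) (zdid r)) (zdexp m.+1 hX)) hY.
set F1 := derive1 f r. set F2 := derive1 (derive1 f) r.
erewrite derive1_val; last first.
  exact: hG.
rewrite /=.
have [e HDe] : exists e, D = e.+2 by exists D.-2; lia.
subst D.
have -> : (e.+2 - 2 = e)%N by lia.
have -> : (e.+2 - 1 = e.+1)%N by lia.
rewrite /Xv /s2 /s3 /ww /tau /s1 /d /B /psi /=.
rewrite -/F1 -/F2 /s2 /s3 !exprS.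
set XM := (_ ^+ m).
field; nz.
Qed.

Theorem mainTheorem4 (R : realType) (D n : nat) (k : R) :
  (4 <= D)%N -> (2 <= n)%N -> (k = 1 \/ k = 0 \/ k = -1) ->
  (forall f : R -> R, twice_diff f -> forall r : R, 0 < r ->
     let d : R := D%:R in
     let B := fun s : R => - derive1 f s / (2 * s) in
     let psi := fun s : R => (k - f s) / s ^+ 2 in
     eval_f (@S_n R D n) k f r
     = r ^- (D - 2) *
       derive1 (fun s => s ^+ (D - 1) * (B s + (d - 4) / 4 * psi s) ^+ (n - 1)
                          * (2 * (n%:R - 2) * B s - (d - 4 + 2 * n%:R) * psi s)) r)
  /\ is_GQTG (@S_n R D n) k.
Proof.
move=> H4 H2 _; split.
  move=> f fd r r0; exact: (main_eq k H4 H2 fd r0).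
exists (fun s x y => s ^+ (D - 1) *
  (- y / (2 * s) + (D%:R - 4) / 4 * ((k - x) / s ^+ 2)) ^+ (n - 1) *
  (2 * (n%:R - 2) * (- y / (2 * s)) - (D%:R - 4 + 2 * n%:R) * ((k - x) / s ^+ 2))).
move=> f fd r r0.
have E := main_eq k H4 H2 fd r0; cbv zeta in E.
rewrite E mulrA mulfV ?mul1r //.
by rewrite expf_neq0 // lt0r_neq0.
Qed.
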